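(* Let $K$ be a field of characteristic zero, $n\ge4$ even, and $\mathfrak{g}$ a filiform Lie algebra of dimension $n$ whose associated graded Lie algebra is isomorphic to $Q_n$; concretely, $\mathfrak{g}$ has an adapted basis $\{e_1,\dots,e_n\}$ in which $[e_i,e_{n+1-i}]=(-1)^ie_n$ for $2\le i\le n-1$. Then $\chi(\mathfrak{g})=2$.
   Context: A filiform Lie algebra of dimension $n$ is a nilpotent Lie algebra with $\dim\mathfrak{g}^k=n-k$ for $2\le k\le n$ (lower central series $\mathfrak{g}^1=\mathfrak{g}$, $\mathfrak{g}^{k+1}=[\mathfrak{g},\mathfrak{g}^k]$). An adapted basis is a basis $\{e_1,\dots,e_n\}$ with $[e_1,e_i]=e_{i+1}$ ($2\le i\le n-1$), $[e_1,e_n]=0$, $[e_2,e_3]\in\langle e_5,\dots,e_n\rangle$; for such a basis one has $[e_i,e_j]\in\langle e_{i+j},\dots,e_n\rangle$ if $i+j\le n$ and $[e_i,e_j]=0$ if $i+j>n+1$. For even $n$, $Q_n$ is the Lie algebra with basis $e_1,\dots,e_n$ and nonzero brackets $[e_1,e_i]=e_{i+1}$ ($2\le i\le n-1$) and $[e_i,e_{n+1-i}]=(-1)^ie_n$ ($2\le i\le n/2$). For $\ell\in\mathfrak{g}^*$, $\mathfrak{g}(\ell)=\{y\in\mathfrak{g}\mid\ell([x,y])=0\ \forall x\in\mathfrak{g}\}$ and $\chi(\mathfrak{g})=\min_{\ell\in\mathfrak{g}^*}\dim\mathfrak{g}(\ell)$. *)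

(* Defs.v *)
From HB Require Import structures.
From mathcomp Require Import all_boot all_order all_algebra.
Set Implicit Arguments. Unset Strict Implicit. Unset Printing Implicit Defensive.
Import Order.TTheory GRing.Theory Num.Theory.
Local Open Scope ring_scope.

Section LieDefs.
Variables (K : fieldType) (n : nat).
Local Notation V := 'rV[K]_n.

Definition is_lie_bracket (br : V -> V -> V) : Prop :=
  [/\ (forall (a : K) (x y z : V), br (a *: x + y) z = a *: br x z + br y z),
      (forall (a : K) (x y z : V), br z (a *: x + y) = a *: br z x + br z y),
      (forall x : V, br x x = 0) &
      (forall x y z : V, br x (br y z) + br y (br z x) + br z (br x y) = 0)].

Definition stdv (i : 'I_n) : V := delta_mx 0 i.

(* one step of the lower central series: S |-> [g, S], as a row space;
   spanned by the brackets of basis vectors of g with the rows of S *)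
Definition lcs_step (br : V -> V -> V) (S : 'M[K]_n) : 'M[K]_n :=
  (\sum_(i < n) \sum_(j < n) <<br (stdv i) (row j S)>>)%MS.

(* lcs br k = g^k  (g^1 = g, g^{k+1} = [g, g^k]); lcs br 0 = g as well *)
Definition lcs (br : V -> V -> V) (k : nat) : 'M[K]_n :=
  iter k.-1 (lcs_step br) 1%:M.

Definition filiform (br : V -> V -> V) : Prop :=
  forall k : nat, (2 <= k <= n)%N -> \rank (lcs br k) = (n - k)%N.

(* e : nat -> V, indexed from 1 : e_1, ..., e_n *)
Definition basis_mx (e : nat -> V) : 'M[K]_n := \matrix_(i < n) e i.+1.

(* span <e_m, ..., e_n> *)
Definition span_from (e : nat -> V) (m : nat) : 'M[K]_n :=
  \matrix_(i < n) (if (m <= i.+1)%N then e i.+1 else 0).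

Definition adapted_basis (br : V -> V -> V) (e : nat -> V) : Prop :=
  [/\ row_free (basis_mx e),
      (forall i : nat, (2 <= i <= n.-1)%N -> br (e 1%N) (e i) = e i.+1),
      br (e 1%N) (e n) = 0 &
      (br (e 2%N) (e 3%N) <= span_from e 5)%MS].

(* linear forms on g are represented by column vectors: l(v) = (v *m l) 0 0 *)
Definition app_form (l : 'cV[K]_n) (v : V) : K := (v *m l) 0 0.

(* U represents g(l) = { y | forall x, l([x,y]) = 0 } and has dimension d *)
Definition stab_dim (br : V -> V -> V) (l : 'cV[K]_n) (d : nat) : Prop :=
  exists U : 'M[K]_n,
    (forall y : V, (y <= U)%MS <-> (forall x : V, app_form l (br x y) = 0))
    /\ \rank U = d.

(* chi(g) = c : c is the minimum over l of dim g(l) *)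
Definition chi_is (br : V -> V -> V) (c : nat) : Prop :=
  (exists l : 'cV[K]_n, stab_dim br l c) /\
  (forall (l : 'cV[K]_n) (d : nat), stab_dim br l d -> (c <= d)%N).

End LieDefs.

(* Main.v *)
Require Import Defs.
From HB Require Import structures.
From mathcomp Require Import all_boot all_order all_algebra.
Import Order.TTheory GRing.Theory Num.Theory.
Set Implicit Arguments. Unset Strict Implicit. Unset Printing Implicit Defensive.
Local Open Scope ring_scope.
From mathcomp Require Import zify.

Lemma vlin0 (K : fieldType) (U W : lmodType K) (f : U -> W)
  (hf : forall a x y, f (a *: x + y) = a *: f x + f y) : f 0 = 0.
Proof.
have := hf 1 0 0; rewrite scaler0 addr0 scale1r => H.
by apply/eqP; rewrite -(subrr (f 0)) {2}H addrK.
Qed.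

Lemma vlinZ (K : fieldType) (U W : lmodType K) (f : U -> W)
  (hf : forall a x y, f (a *: x + y) = a *: f x + f y) a x : f (a *: x) = a *: f x.
Proof. by rewrite -[a *: x]addr0 hf (vlin0 hf) addr0. Qed.

Lemma vlinD (K : fieldType) (U W : lmodType K) (f : U -> W)
  (hf : forall a x y, f (a *: x + y) = a *: f x + f y) x y : f (x + y) = f x + f y.
Proof. by rewrite -[x]scale1r hf !scale1r. Qed.

Lemma vlinN (K : fieldType) (U W : lmodType K) (f : U -> W)
  (hf : forall a x y, f (a *: x + y) = a *: f x + f y) x : f (- x) = - f x.
Proof. by rewrite -scaleN1r (vlinZ hf) scaleN1r. Qed.

Lemma vlin_sum (K : fieldType) (U W : lmodType K) (f : U -> W)
  (hf : forall a x y, f (a *: x + y) = a *: f x + f y) (I : Type) (r : seq I)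
  (P : pred I) (F : I -> U) :
  f (\sum_(i <- r | P i) F i) = \sum_(i <- r | P i) f (F i).
Proof.
elim/big_rec2: _ => [|i y1 y2 _ <-]; first by rewrite (vlin0 hf).
by rewrite (vlinD hf).
Qed.

Lemma slin0 (K : fieldType) (U : lmodType K) (f : U -> K)
  (hf : forall a x y, f (a *: x + y) = a * f x + f y) : f 0 = 0.
Proof.
have := hf 1 0 0; rewrite scaler0 addr0 mul1r => H.
by apply/eqP; rewrite -(subrr (f 0)) {2}H addrK.
Qed.

Lemma slinZ (K : fieldType) (U : lmodType K) (f : U -> K)
  (hf : forall a x y, f (a *: x + y) = a * f x + f y) a x : f (a *: x) = a * f x.
Proof. by rewrite -[a *: x]addr0 hf (slin0 hf) addr0. Qed.

Lemma slinD (K : fieldType) (U : lmodType K) (f : U -> K)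
  (hf : forall a x y, f (a *: x + y) = a * f x + f y) x y : f (x + y) = f x + f y.
Proof. by rewrite -{1}[x]scale1r hf mul1r. Qed.

Lemma slin_sum (K : fieldType) (U : lmodType K) (f : U -> K)
  (hf : forall a x y, f (a *: x + y) = a * f x + f y) (I : Type) (r : seq I)
  (P : pred I) (F : I -> U) :
  f (\sum_(i <- r | P i) F i) = \sum_(i <- r | P i) f (F i).
Proof.
elim: r => [|x r IH]; first by rewrite !big_nil (slin0 hf).
by rewrite !big_cons; case: (P x) => //; rewrite (slinD hf) IH.
Qed.

Lemma slin_expand (K : fieldType) n (f : 'rV[K]_n -> K)
  (hf : forall a x y, f (a *: x + y) = a * f x + f y) x :
  f x = \sum_i x 0 i * f (stdv K i).
Proof.
rewrite {1}(row_sum_delta x) (slin_sum hf); apply: eq_bigr => i _.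
by rewrite (slinZ hf).
Qed.

Lemma app_form_lin (K : fieldType) n (l : 'cV[K]_n) a x y :
  app_form l (a *: x + y) = a * app_form l x + app_form l y.
Proof. by rewrite /app_form mulmxDl -scalemxAl !mxE. Qed.

Lemma br_linL (K : fieldType) n (br : 'rV[K]_n -> 'rV_n -> 'rV_n)
  (lie : is_lie_bracket br) z a x y : br (a *: x + y) z = a *: br x z + br y z.
Proof. by case: lie => H _ _ _; apply: H. Qed.

Lemma br_linR (K : fieldType) n (br : 'rV[K]_n -> 'rV_n -> 'rV_n)
  (lie : is_lie_bracket br) z a x y : br z (a *: x + y) = a *: br z x + br z y.
Proof. by case: lie => _ H _ _; apply: H. Qed.

Lemma br_anti (K : fieldType) n (br : 'rV[K]_n -> 'rV_n -> 'rV_n)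
  (lie : is_lie_bracket br) x y : br x y = - br y x.
Proof.
have hL := br_linL lie; have hR := br_linR lie.
case: lie => _ _ Hxx _.
have := Hxx (x + y).
rewrite (vlinD (hL (x + y))) !(vlinD (hR _)) !Hxx add0r addr0 => /eqP.
by rewrite addr_eq0 => /eqP.
Qed.

Definition formA (K : fieldType) n (br : 'rV[K]_n -> 'rV_n -> 'rV_n) (l : 'cV[K]_n) :
  'M[K]_n := \matrix_(i, j) app_form l (br (stdv K j) (stdv K i)).

Lemma formA_row (K : fieldType) n (br : 'rV[K]_n -> 'rV_n -> 'rV_n)
  (lie : is_lie_bracket br) l y j :
  (y *m formA br l) 0 j = app_form l (br (stdv K j) y).
Proof.
have hf : forall a x z, app_form l (br (stdv K j) (a *: x + z)) =
   a * app_form l (br (stdv K j) x) + app_form l (br (stdv K j) z).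
  by move=> a x z; rewrite (br_linR lie) app_form_lin.
rewrite mxE (slin_expand hf y); apply: eq_bigr => i _; by rewrite mxE.
Qed.

Lemma kerA (K : fieldType) n (br : 'rV[K]_n -> 'rV_n -> 'rV_n)
  (lie : is_lie_bracket br) l y :
  (forall x, app_form l (br x y) = 0) <-> y *m formA br l = 0.
Proof.
split=> [H|H x].
  by apply/rowP => j; rewrite formA_row // mxE H.
have hf : forall a x z, app_form l (br (a *: x + z) y) =
   a * app_form l (br x y) + app_form l (br z y).
  by move=> a x' z; rewrite (br_linL lie) app_form_lin.
rewrite (slin_expand hf x) big1 // => i _.
by rewrite -formA_row // H mxE mulr0.
Qed.

Lemma stab_iff (K : fieldType) n (br : 'rV[K]_n -> 'rV_n -> 'rV_n)
  (lie : is_lie_bracket br) l d :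
  stab_dim br l d <-> d = (n - \rank (formA br l))%N.
Proof.
split.
  case=> U [HU <-]; rewrite -mxrank_ker; apply: eqmx_rank.
  apply/andP; split; apply/row_subP => i.
    by rewrite sub_kermx; apply/eqP/(kerA lie); apply/HU; apply: row_sub.
  apply/HU/(kerA lie).
  by rewrite -row_mul mulmx_ker row0.
move=> ->; exists (kermx (formA br l)); split; last by rewrite mxrank_ker.
move=> y; rewrite sub_kermx; split.
  by move/eqP/(kerA lie).
by move/(kerA lie)/eqP.
Qed.

Lemma formA_skew (K : fieldType) n (br : 'rV[K]_n -> 'rV_n -> 'rV_n)
  (lie : is_lie_bracket br) l : (formA br l)^T = - formA br l.
Proof.
apply/matrixP => i j; rewrite !mxE (br_anti lie).
by rewrite /app_form mulNmx mxE.
Qed.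

Lemma sum_dl (F : fieldType) m (x : 'I_m -> F) c :
  \sum_l x l * (l == c)%:R = x c.
Proof.
rewrite (bigD1 c) //= eqxx mulr1 big1 ?addr0 // => l /negbTE ->.
by rewrite mulr0.
Qed.

Lemma skew_ker2 (F : fieldType) (m : nat) (A : 'M[F]_m)
  (two : (2%:R : F) != 0) (hodd : ~~ odd m) (skew : A^T = - A)
  (z : 'rV_m) (nz : z != 0) (zA : z *m A = 0) :
  (2 <= \rank (kermx A))%N.
Proof.
case: m A z nz zA hodd skew => [|m] A z nz zA hodd skew.
  by move: nz; rewrite (thinmx0 z) eqxx.
have [k zk] : exists k, z 0 k != 0.
  apply/existsP; apply: contraNT nz => /existsPn H.
  by apply/eqP/rowP => j; rewrite mxE; move: (H j); rewrite negbK => /eqP.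
pose A' : 'M_m := row' k (col' k A).
have skew' : A'^T = - A'.
  apply/matrixP => i j; rewrite !mxE.
  by have := congr1 (fun M : 'M[F]_m.+1 => M (lift k i) (lift k j)) skew; rewrite !mxE.
have hdet : \det A' = 0.
  have H : \det A' = - \det A'.
    rewrite -{1}det_tr skew' -scaleN1r detZ -signr_odd.
    by move: hodd => /= /negbNE ->; rewrite expr1 mulN1r.
  have : \det A' * 2%:R = 0 by rewrite mulr_natr mulr2n {1}H addNr.
  by move/eqP; rewrite mulf_eq0 (negbTE two) orbF => /eqP.
have /det0P [w nzw wA'] : \det A' == 0 by rewrite hdet.
pose v : 'rV_m.+1 := \row_j (if unlift k j is Some j' then w 0 j' else 0).
have vk : v 0 k = 0 by rewrite mxE unlift_none.
have vl : forall j, v 0 (lift k j) = w 0 j by move=> j; rewrite mxE liftK.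
have hl : forall j, (v *m A) 0 (lift k j) = 0.
  move=> j; rewrite mxE (bigD1_ord k) //= vk mul0r add0r.
  transitivity ((w *m A') 0 j); last by rewrite wA' mxE.
  by rewrite mxE; apply: eq_bigr => i _; rewrite vl !mxE.
have AzT : A *m z^T = 0.
  by rewrite -[A]opprK -skew mulNmx -trmx_mul zA trmx0 oppr0.
have hk : (v *m A) 0 k = 0.
  have : (v *m A) *m z^T = 0 by rewrite -mulmxA AzT mulmx0.
  move/(congr1 (fun M : 'M[F]_1 => M 0 0)); rewrite !mxE (bigD1_ord k) //= big1.
    rewrite addr0 => /eqP; rewrite mulf_eq0 => /orP [/eqP H|].
      by move: H; rewrite mxE.
    by rewrite mxE (negbTE zk).
  by move=> i _; rewrite hl mul0r.
have vA : v *m A = 0.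
  by apply/rowP => j; rewrite [RHS]mxE; case: (unliftP k j) => [j'|] ->.
have [j0 wj0] : exists j0, w 0 j0 != 0.
  apply/existsP; apply: contraNT nzw => /existsPn H.
  by apply/eqP/rowP => j; rewrite mxE; move: (H j); rewrite negbK => /eqP.
pose S : 'M[F]_(2, m.+1) := \matrix_(i, j) (if i == 0 then v 0 j else z 0 j).
pose T : 'M[F]_(m.+1, 2) := \matrix_(j, b)
   (if b == 0 then (j == lift k j0)%:R else (j == k)%:R).
have ST : forall i b, (S *m T) i b =
   if i == 0 then (if b == 0 then v 0 (lift k j0) else v 0 k)
   else (if b == 0 then z 0 (lift k j0) else z 0 k).
  move=> i b; rewrite mxE.
  rewrite (eq_bigr (fun l => (if i == 0 then v 0 l else z 0 l) *
     (if b == 0 then (l == lift k j0)%:R else (l == k)%:R))); last first.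
    by move=> l _; rewrite !mxE.
  by case: (i == 0); case: (b == 0); rewrite sum_dl.
have SA : (S <= kermx A)%MS.
  rewrite sub_kermx; apply/eqP/matrixP => i j; rewrite !mxE.
  rewrite (eq_bigr (fun l => (if i == 0 then v 0 l else z 0 l) * A l j)); last first.
    by move=> l _; rewrite !mxE.
  case: (i == 0).
    by have := congr1 (fun M : 'rV[F]_m.+1 => M 0 j) vA; rewrite !mxE.
  by have := congr1 (fun M : 'rV[F]_m.+1 => M 0 j) zA; rewrite !mxE.
have trig : is_trig_mx (S *m T).
  apply/is_trig_mxP => i j; rewrite ST.
  case: i => [[|[|//]] Hi] //; case: j => [[|[|//]] Hj] //= _.
have unit : S *m T \in unitmx.
  rewrite unitmxE (det_trig trig) unitfE big_ord_recr big_ord_recr big_ord0 /=.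
  rewrite mul1r !ST /= vl !mulf_neq0 //.
have : (\rank (S *m T) <= \rank (kermx A))%N.
  exact: leq_trans (mxrankM_maxl _ _) (mxrankS SA).
by rewrite mxrank_unit.
Qed.

Lemma lcs_succ (K : fieldType) n (br : 'rV[K]_n -> 'rV_n -> 'rV_n) k :
  (0 < k)%N -> lcs br k.+1 = lcs_step br (lcs br k).
Proof. by case: k. Qed.

Lemma step_sub (K : fieldType) n (br : 'rV[K]_n -> 'rV_n -> 'rV_n)
  (lie : is_lie_bracket br) (S : 'M_n) x y :
  (x <= S)%MS -> (br y x <= lcs_step br S)%MS.
Proof.
move/submxP => [u ->]; rewrite mulmx_sum_row (row_sum_delta y).
rewrite (vlin_sum (br_linL lie _)); apply: summx_sub => i _.
rewrite (vlinZ (br_linL lie _)); apply: scalemx_sub.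
rewrite (vlin_sum (br_linR lie _)); apply: summx_sub => j _.
rewrite (vlinZ (br_linR lie _)); apply: scalemx_sub.
apply: (sumsmx_sup i) => //; apply: (sumsmx_sup j) => //.
by rewrite genmxE.
Qed.

Lemma e_sub (K : fieldType) n (br : 'rV[K]_n -> 'rV_n -> 'rV_n)
  (lie : is_lie_bracket br) e (adapt : adapted_basis br e) k :
  (1 <= k <= n.-1)%N -> (e k.+1 <= lcs br k)%MS.
Proof.
case: adapt => _ he1 _ _.
elim: k => [//|[|k] IH] /andP [_ hk]; first by rewrite submx1.
rewrite lcs_succ // -he1; last by rewrite /= hk.
apply: step_sub => //; apply: IH.
by rewrite /= (leq_trans _ hk).
Qed.

Lemma central (K : fieldType) n (br : 'rV[K]_n -> 'rV_n -> 'rV_n)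
  (lie : is_lie_bracket br) (fil : filiform br) e (adapt : adapted_basis br e)
  (n2 : (2 <= n)%N) x : br x (e n) = 0.
Proof.
have hn : lcs br n = 0.
  by apply/eqP; rewrite -mxrank_eq0 fil ?subnn // n2 leqnn.
have hm : (0 < n.-1)%N by rewrite -ltnS prednK // (leq_trans _ n2).
have H : (e n <= lcs br n.-1)%MS.
  have := @e_sub K n br lie e adapt n.-1.
  by rewrite prednK ?(leq_trans _ n2) // => ->; rewrite // hm leqnn.
have := step_sub lie x H.
rewrite -(lcs_succ br hm) prednK; last exact: (leq_trans _ n2).
by rewrite hn submx0 => /eqP.
Qed.

Lemma jac1 (K : fieldType) n (br : 'rV[K]_n -> 'rV_n -> 'rV_n)
  (lie : is_lie_bracket br) e (adapt : adapted_basis br e) i j :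
  (2 <= i <= n.-1)%N -> (2 <= j <= n.-1)%N ->
  br (e 1%N) (br (e i) (e j)) = br (e i) (e j.+1) + br (e i.+1) (e j).
Proof.
move=> hi hj; case: (adapt) => _ he1 _ _.
have J : br (e 1%N) (br (e i) (e j)) + br (e i) (br (e j) (e 1%N))
   + br (e j) (br (e 1%N) (e i)) = 0 by case: lie => _ _ _ ->.
rewrite (br_anti lie (e j)) he1 // (vlinN (br_linR lie _)) he1 //
  (br_anti lie (e j)) in J.
apply/eqP; rewrite -subr_eq0 opprD addrA; exact/eqP.
Qed.

Lemma line_zero (K : fieldType) n (br : 'rV[K]_n -> 'rV_n -> 'rV_n)
  (lie : is_lie_bracket br) (fil : filiform br) e (adapt : adapted_basis br e)
  (n4 : (4 <= n)%N)
  (Qbr : forall i : nat, (2 <= i <= n.-1)%N ->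
           br (e i) (e (n.+1 - i)%N) = (-1) ^+ i *: e n) d :
  forall i j, (2 <= i <= n)%N -> (2 <= j <= n)%N -> (i + j = n + 2 + d)%N ->
  br (e i) (e j) = 0.
Proof.
have cen := central lie fil adapt (leq_trans (isT : (2 <= 4)%N) n4).
elim: d => [|d IHd] i j hi hj hs.
- have key : forall t, (t <= n - 2)%N -> br (e (2 + t)%N) (e (n - t)%N) = 0.
    elim=> [|t IHt] ht; first by rewrite subn0 cen.
    have := @jac1 K n br lie e adapt (2 + t)%N (n - t).-1 ltac:(lia) ltac:(lia).
    rewrite prednK; last by lia.
    rewrite IHt; last by lia.
    rewrite add0r (_ : (2 + t.+1 = (2 + t).+1)%N) //.
    rewrite (_ : (n - t.+1 = (n - t).-1)%N); last by lia.
    move=> <-.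
    rewrite (_ : ((n - t).-1 = n.+1 - (2 + t))%N); last by lia.
    rewrite Qbr; last by lia.
    by rewrite (vlinZ (br_linR lie _)) cen scaler0.
  have := key (n - j)%N; rewrite (_ : (2 + (n - j) = i)%N); last by lia.
  by rewrite (_ : (n - (n - j) = j)%N) => [->//|]; lia.
- have key : forall t, (t <= n - 3 - d)%N ->
     br (e (d + 3 + t)%N) (e (n - t)%N) = 0.
    elim=> [|t IHt] ht; first by rewrite subn0 cen.
    have := @jac1 K n br lie e adapt (d + 3 + t)%N (n - t).-1 ltac:(lia) ltac:(lia).
    rewrite prednK; last by lia.
    rewrite IHt; last by lia.
    rewrite add0r (_ : (d + 3 + t.+1 = (d + 3 + t).+1)%N); last by lia.
    rewrite (_ : (n - t.+1 = (n - t).-1)%N); last by lia.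
    move=> <-.
    rewrite IHd ?(vlin0 (br_linR lie _)) //; lia.
  have := key (n - j)%N; rewrite (_ : (d + 3 + (n - j) = i)%N); last by lia.
  by rewrite (_ : (n - (n - j) = j)%N) => [->//|]; lia.
Qed.
Unset Implicit Arguments. Set Strict Implicit. Set Printing Implicit Defensive.

Theorem proposition6p9 (K : fieldType) (n : nat)
  (charK0 : [pchar K] =i pred0)
  (n_ge4 : (4 <= n)%N) (n_even : ~~ odd n)
  (br : 'rV[K]_n -> 'rV[K]_n -> 'rV[K]_n)
  (lie : is_lie_bracket br)
  (fil : filiform br)
  (e : nat -> 'rV[K]_n)
  (adapt : adapted_basis br e)
  (Qbr : forall i : nat, (2 <= i <= n.-1)%N ->
           br (e i) (e (n.+1 - i)%N) = (-1) ^+ i *: e n) :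
  chi_is br 2.
Proof.
have two : (2%:R : K) != 0.
  by move: (charK0 2); rewrite !inE /= => /negbT.
have cen := central lie fil adapt (leq_trans (isT : (2 <= 4)%N) n_ge4).
have Eu : basis_mx e \in unitmx by rewrite -row_free_unit; case: adapt.
have jn : (n.-1 < n)%N by lia.
pose j := Ordinal jn.
pose l0 : 'cV[K]_n := invmx (basis_mx e) *m delta_mx j 0.
have l0en : app_form l0 (e n) = 1.
  have -> : e n = delta_mx 0 j *m basis_mx e.
    by rewrite -rowE rowK /= prednK //; lia.
  by rewrite /app_form /l0 mulmxA mulmxK // mul_delta_mx mxE !eqxx.
have upper : forall l, (\rank (formA br l) <= n - 2)%N.
  move=> l.
  have zA : e n *m formA br l = 0.
    by apply/(kerA lie) => x; rewrite cen /app_form mul0mx mxE.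
  have nz : e n != 0.
    apply/eqP => H; move: l0en; rewrite H /app_form mul0mx mxE => /eqP.
    by rewrite eq_sym oner_eq0.
  have := skew_ker2 two n_even (formA_skew lie l) nz zA.
  rewrite mxrank_ker; have := rank_leq_row (formA br l); lia.
pose A := formA br l0.
pose P : 'M[K]_(n - 2, n) := \matrix_(a, i) e (n - 1 - a)%N 0 i.
pose Q : 'M[K]_(n, n - 2) := \matrix_(i, b) e (b + 2)%N 0 i.
have Nent : forall a b, (P *m A *m Q) a b =
    app_form l0 (br (e (b + 2)%N) (e (n - 1 - a)%N)).
  move=> a b; rewrite mxE.
  have hf : forall c x y, app_form l0 (br (c *: x + y) (e (n - 1 - a)%N)) =
      c * app_form l0 (br x (e (n - 1 - a)%N)) + app_form l0 (br y (e (n - 1 - a)%N)).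
    by move=> c x y; rewrite (br_linL lie) app_form_lin.
  rewrite (slin_expand hf); apply: eq_bigr => i _.
  have -> : (P *m A) a i = (e (n - 1 - a)%N *m A) 0 i.
    by rewrite !mxE; apply: eq_bigr => k _; rewrite !mxE.
  by rewrite formA_row // mxE mulrC.
have trig : is_trig_mx (P *m A *m Q).
  apply/is_trig_mxP => a b hab; rewrite Nent.
  rewrite (line_zero lie fil adapt n_ge4 Qbr (d := (b - a).-1)).
  - by rewrite /app_form mul0mx mxE.
  - have := ltn_ord b; lia.
  - have := ltn_ord a; lia.
  - have := ltn_ord a; lia.
have unitN : P *m A *m Q \in unitmx.
  rewrite unitmxE (det_trig trig) unitfE; apply/prodf_neq0 => a _.
  rewrite Nent (_ : (n - 1 - a = n.+1 - (a + 2))%N); last by lia.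
  rewrite Qbr; last by have := ltn_ord a; lia.
  rewrite /app_form -scalemxAl mxE -/(app_form l0 (e n)) l0en mulr1.
  by rewrite signr_eq0.
have lower : (n - 2 <= \rank A)%N.
  rewrite -{1}(mxrank_unit unitN).
  exact: leq_trans (mxrankM_maxl _ _) (mxrankM_maxr _ _).
split.
  exists l0; apply/(stab_iff lie).
  have := upper l0; rewrite -/A; lia.
move=> l d /(stab_iff lie) ->; have := upper l; have := rank_leq_row (formA br l).
lia.
Qed.
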